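(* For each integer $n \ge 3$, define $D_{a,n} = \overline{D}(1 + 5\cdot 2^{2n}, 2^{-(2n+3)})$ and $D_{b,n} = \overline{D}(1+7\cdot 2^{2n}, 2^{-(2n+3)})$. If $t \in \mathbb{Q}_2$ lies in $D_{a,n}$ or in $D_{b,n}$ for some $n \ge 3$, then $f_t$ is post-critically bounded. Equivalently, the forward orbit of $1$ under $f_t$ is bounded.
   Context: Let $|\cdot|$ denote the $2$-adic absolute value on $\mathbb{C}_2$, normalized by $|2| = 1/2$. The notation $\overline{D}(a,\delta)$ denotes the closed disk $\{z \in \mathbb{C}_2 : |z-a| \le \delta\}$. For $t \in \mathbb{C}_2$, let $f_t(z) = -\tfrac32 t(-2z^3+3z^2)+1$. Its critical points are $0$ and $1$, and $f_t(0)=1$. Post-critically bounded means that both critical points have bounded forward orbits. *)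

(* Defs.v *)
(* Q_2 is modelled as the completion of Q for the 2-adic
   absolute value: an element of Q_2 is represented by a 2-adic Cauchy
   sequence of rationals; ring operations on Q_2 are computed termwise. *)
From mathcomp Require Import all_boot all_order all_algebra.
Set Implicit Arguments. Unset Strict Implicit. Unset Printing Implicit Defensive.
Import Order.TTheory GRing.Theory Num.Theory.
Local Open Scope ring_scope.

Definition abs2 (x : rat) : rat :=
  if x == 0 then 0
  else (2%:Q ^+ logn 2 `|denq x|%N) / (2%:Q ^+ logn 2 `|numq x|%N).

Definition cauchy2 (u : nat -> rat) : Prop :=
  forall eps : rat, 0 < eps ->
    exists N : nat, forall m n : nat, (N <= m)%N -> (N <= n)%N ->
      abs2 (u m - u n) < eps.

(* For a 2-adic Cauchy sequence u representing x in Q_2 and d > 0,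
   |x| <= d  iff  eventually |u k|_2 <= d (the values |u k|_2 are
   eventually constant or tend to 0). *)
Definition abs2_le (u : nat -> rat) (d : rat) : Prop :=
  exists N : nat, forall k : nat, (N <= k)%N -> abs2 (u k) <= d.

Definition in_cdisk (u : nat -> rat) (a d : rat) : Prop :=
  abs2_le (fun k => u k - a) d.

Definition f (t z : rat) : rat :=
  - (3%:Q / 2%:Q) * t * (- 2%:Q * z ^+ 3 + 3%:Q * z ^+ 2) + 1.

(* The m-th forward iterate f_t^m(z0), for t in Q_2 represented by the
   Cauchy sequence t and z0 in Q: represented termwise (polynomial maps are
   continuous, so this is a Cauchy sequence representing f_t^m(z0)). *)
Definition orbit (t : nat -> rat) (z0 : rat) (m : nat) : nat -> rat :=
  fun k => iter m (f (t k)) z0.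

Definition orbit_bounded (t : nat -> rat) (z0 : rat) : Prop :=
  exists M : rat, forall m : nat, abs2_le (orbit t z0 m) M.

(* f_t is post-critically bounded: both critical points 0 and 1 have
   bounded forward orbits. *)
Definition pcb (t : nat -> rat) : Prop :=
  orbit_bounded t 0 /\ orbit_bounded t 1.

Definition radius (n : nat) : rat := (2%:Q ^+ (2 * n + 3))^-1.
Definition center_a (n : nat) : rat := 1 + 5%:Q * 2%:Q ^+ (2 * n).
Definition center_b (n : nat) : rat := 1 + 7%:Q * 2%:Q ^+ (2 * n).

(* Main.v *)
Require Import Defs.
From mathcomp Require Import all_boot all_order all_algebra.
From mathcomp Require Import ring zify.
Set Implicit Arguments. Unset Strict Implicit. Unset Printing Implicit Defensive.
Import Order.TTheory GRing.Theory Num.Theory.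
Local Open Scope ring_scope.



Definition Z2 (x : rat) : Prop :=
  exists (a : int) (b : nat), odd b /\ x = a%:~R / b%:R.

Lemma oddn_neq0 (b : nat) : odd b -> (b%:R : rat) != 0.
Proof. move=> ob; rewrite pnatr_eq0; by case: b ob. Qed.

Lemma Z2_nat (n : nat) : Z2 n%:R.
Proof. exists n%:Z, 1%N; split => //; rewrite divr1. by []. Qed.

Lemma Z2_add x y : Z2 x -> Z2 y -> Z2 (x + y).
Proof.
move=> [a1 [b1 [o1 ->]]] [a2 [b2 [o2 ->]]].
exists (a1 * b2%:Z + a2 * b1%:Z), (b1 * b2)%N; split; first by rewrite oddM o1 o2.
have h1 := oddn_neq0 o1; have h2 := oddn_neq0 o2.
rewrite natrM rmorphD !rmorphM /=. field. by rewrite h1 h2.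
Qed.

Lemma Z2_mul x y : Z2 x -> Z2 y -> Z2 (x * y).
Proof.
move=> [a1 [b1 [o1 ->]]] [a2 [b2 [o2 ->]]].
exists (a1 * a2), (b1 * b2)%N; split; first by rewrite oddM o1 o2.
have h1 := oddn_neq0 o1; have h2 := oddn_neq0 o2.
rewrite natrM rmorphM /=. field. by rewrite h1 h2.
Qed.

Lemma Z2_opp x : Z2 x -> Z2 (- x).
Proof.
move=> [a1 [b1 [o1 ->]]]. exists (- a1), b1; split => //.
rewrite rmorphN /=. by rewrite mulNr.
Qed.

Lemma Z2_exp x n : Z2 x -> Z2 (x ^+ n).
Proof. move=> h; elim: n => [|n IH]; first by rewrite expr0; exact: (Z2_nat 1).
by rewrite exprS; apply: Z2_mul. Qed.

Lemma Z2_parity y : Z2 y -> exists y1, Z2 y1 /\ (y = 2 * y1 \/ y = 1 + 2 * y1).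
Proof.
move=> [a [b [ob ->]]].
have hb := oddn_neq0 ob.
have ea := divz_eq a 2.
have hr0 : (0 <= (a %% 2)%Z) by apply: modz_ge0.
have hr1 : ((a %% 2)%Z < 2) by apply: ltz_pmod.
have eb := odd_double_half b. rewrite ob in eb.
have : ((a %% 2)%Z = 0) \/ ((a %% 2)%Z = 1).
  move: hr0 hr1; case: (a %% 2)%Z => [[|[|k]]|k] //=; by auto.
case=> hr.
- exists ((a %/ 2)%Z%:~R / b%:R); split.
    by exists (a %/ 2)%Z, b.
  left. rewrite {1}ea hr addr0 rmorphM /=. field. done.
- exists (((a %/ 2)%Z - (b./2)%:Z)%:~R / b%:R); split.
    by exists ((a %/ 2)%Z - (b./2)%:Z), b.
  right. rewrite {1}ea hr rmorphD rmorphM rmorphB /=.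
  have hbR : (b%:R : rat) = 2 * (b./2)%:R + 1.
    rewrite -{1}eb /= -addnn !natrD /=; ring.
  rewrite hbR. rewrite hbR in hb. field. done.
Qed.



Lemma two_gt1 : (1 : rat) < 2%:Q. Proof. by []. Qed.
Lemma two_exp_gt0 k : (0 : rat) < 2%:Q ^+ k. Proof. by apply: exprn_gt0. Qed.

Lemma abs2_Z2 x K : abs2 x <= (2%:Q ^+ K)^-1 -> Z2 (x / 2%:Q ^+ K).
Proof.
rewrite /abs2. case: eqP => [-> _|/eqP x0].
  exists 0, 1%N; split => //. by rewrite !mul0r.
set ld := logn 2 `|denq x|; set ln := logn 2 `|numq x|.
move=> h.
rewrite ler_pdivrMr ?two_exp_gt0 // mulrC ler_pdivlMr ?two_exp_gt0 // -exprD in h.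
rewrite ler_eXn2l ?two_gt1 // in h.
have hn0 : (0 < `|numq x|)%N by rewrite absz_gt0 numq_eq0.
have hd0 : (0 < `|denq x|)%N by rewrite absz_gt0 denq_neq0.
have ld0 : ld = 0%N.
  case: (posnP ld) => // hpos. exfalso.
  have : (0 < ln)%N by apply: leq_trans h; apply: leq_trans hpos (leq_addr _ _).
  rewrite logn_gt0 mem_primes => /and3P [_ _ dn].
  move: hpos; rewrite /ld logn_gt0 mem_primes => /and3P [_ _ dd].
  have := coprime_num_den x. rewrite /coprime => /eqP hg.
  have : (2 %| gcdn `|numq x| `|denq x|)%N by rewrite dvdn_gcd dn dd.
  by rewrite hg.
have oddd : odd `|denq x|.
  move: ld0; rewrite /ld => /eqP. rewrite -leqn0 leqNgt logn_gt0 mem_primes hd0 /= dvdn2.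
  by case: (odd _).
have hdiv : (2 ^ K %| `|numq x|)%N.
  rewrite pfactor_dvdn //. apply: leq_trans h. by rewrite leq_addl.
have hdz : ((2 ^ K)%N%:Z %| numq x)%Z by exact: hdiv.
case/dvdzP: hdz => q hq.
exists q, (absz (denq x)); split => //.
rewrite -{1}(divq_num_den x) hq natr_absz.
rewrite gtr0_norm ?denq_gt0 // rmorphM /=.
have e2 : (((2^K)%N%:Z)%:~R : rat) = 2%:Q ^+ K by change (((2 ^ K)%N%:R : rat) = (2%:R) ^+ K); rewrite natrX.
rewrite e2.
have hd : ((denq x)%:~R : rat) != 0 by rewrite intr_eq0 denq_neq0.
have h2 : (2%:Q ^+ K : rat) != 0 by rewrite gt_eqF ?two_exp_gt0.
field. by rewrite hd h2.
Qed.

Lemma Z2_abs2 w : Z2 w -> abs2 (w / 2) <= 2.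
Proof.
move=> [a [b [ob ew]]].
rewrite /abs2. case: eqP => [_ |/eqP x0]; first by [].
set z := w / 2 in x0 *.
have hb := oddn_neq0 ob.
have ez : z = a%:~R / (2 * b)%:R by rewrite /z ew natrM; field; rewrite hb.
have hd : ((denq z)%:~R : rat) != 0 by rewrite intr_eq0 denq_neq0.
have a0 : a != 0.
  apply/eqP => a0; move: x0; by rewrite ez a0 mul0r eqxx.
have ecross : numq z * (2 * b)%N%:Z = a * denq z.
  apply: (@intr_inj rat). rewrite !rmorphM /=.
  have e : ((numq z)%:~R / (denq z)%:~R : rat) = a%:~R / (2 * b)%:R.
    by rewrite divq_num_den.
  have hd' : (((2 * b)%N%:R : rat) != 0) by rewrite natrM mulf_neq0.
  have hb2 : ((2 * b)%:R : rat) != 0 by rewrite natrM mulf_neq0.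
  move/eqP: e. rewrite eqr_div // => /eqP e. exact: e.
have := congr1 absz ecross. rewrite !abszM /=.
have hn0 : (0 < `|numq z|)%N by rewrite absz_gt0 numq_eq0.
have hd0 : (0 < `|denq z|)%N by rewrite absz_gt0 denq_neq0.
have hb0 : (0 < b)%N by case: b ob {hb ew ez ecross}.
have ha0 : (0 < `|a|)%N by rewrite absz_gt0.
move/(congr1 (logn 2)).
have lb : logn 2 b = 0%N by apply: logn_coprime; rewrite coprime2n.
rewrite lognM ?muln_gt0 ?hb0 // lognM // lognM // lb (_ : logn 2 2 = 1%N) // addn0 => hl.
have hle : (logn 2 `|denq z| <= logn 2 `|numq z| + 1)%N.
  rewrite hl addnC. apply: leq_addr.
rewrite ler_pdivrMr ?two_exp_gt0 //.
apply: le_trans (_ : 2%:Q ^+ (logn 2 `|numq z| + 1) <= _).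
  by rewrite ler_eXn2l ?two_gt1.
by rewrite exprD expr1 mulrC.
Qed.



Lemma Z2_one : Z2 1. Proof. exact: (Z2_nat 1). Qed.

Ltac z2 := repeat match goal with
 | |- Z2 (_ + _) => apply: Z2_add
 | |- Z2 (_ * _) => apply: Z2_mul
 | |- Z2 (- _) => apply: Z2_opp
 | |- Z2 (_ ^+ _) => apply: Z2_exp
 | |- Z2 1 => exact: Z2_one
 | |- Z2 (_%:R) => apply: Z2_nat
 | |- Z2 _ => assumption
 end.

Definition G (t w : rat) : rat := (3 * t * w ^+ 2 * (w - 3) + 8) / 4.

Lemma fG t z : 2 * f t z = G t (2 * z).
Proof. rewrite /f /G. by field. Qed.

Lemma G_eq t w v : 3 * t * w ^+ 2 * (w - 3) + 8 = 4 * v -> G t w = v.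
Proof. move=> h; rewrite /G h; by field. Qed.

Lemma wS t m : 2 * iter m.+1 (f t) 1 = G t (2 * iter m (f t) 1).
Proof. by rewrite iterS fG. Qed.

Definition good (b : rat) := exists y, Z2 y /\ (b = 5 + 8 * y \/ b = 7 + 8 * y).

Lemma good_Z2 b : good b -> Z2 b.
Proof. by move=> [y [hy [->| ->]]]; z2. Qed.

Lemma stepL t K M eta b : Z2 K -> Z2 M -> Z2 eta -> t = 1 + 16 * K * M * eta ->
  good b -> exists b', good b' /\ G t (-1 + 4 * M * b) = -1 + M * b'.
Proof.
move=> hK hM he ht [y [hy [eb|eb]]].
- pose tau := 2 * K * M * eta.
  pose Y := 16 + 27 * y + 27 * tau * b - 9 * t * M * b ^+ 2 + 6 * t * M ^+ 2 * b ^+ 3 - 6 * K * eta.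
  exists (7 + 8 * Y); split.
    exists Y; split; last by right.
    rewrite /Y /tau ht eb; z2.
  apply: G_eq; rewrite /Y /tau ht eb. ring.
- pose tau := 2 * K * M * eta.
  pose Y := 23 + 27 * y + 27 * tau * b - 9 * t * M * b ^+ 2 + 6 * t * M ^+ 2 * b ^+ 3 - 6 * K * eta.
  exists (5 + 8 * Y); split.
    exists Y; split; last by left.
    rewrite /Y /tau ht eb; z2.
  apply: G_eq; rewrite /Y /tau ht eb. ring.
Qed.

Lemma transL t eta n1 b2 : Z2 eta -> t = 1 + 4 ^+ n1.+1 * eta -> good b2 ->
  2 * iter 2 (f t) 1 = -1 + 4 ^+ n1 * b2 ->
  forall k m, (k + m)%N = n1 -> exists b, good b /\ 2 * iter k.+2 (f t) 1 = -1 + 4 ^+ m * b.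
Proof.
move=> he ht hb2 hw2 k; elim: k => [|k IH] m hkm.
  by move: hkm; rewrite add0n => ->; exists b2.
have hkm2 : (k + m.+1)%N = n1 by rewrite addnS -addSn.
have [b [hb hw]] := IH m.+1 hkm2.
have hK : Z2 (4 ^+ k) by z2.
have hM : Z2 (4 ^+ m) by z2.
have ht' : t = 1 + 16 * 4 ^+ k * 4 ^+ m * eta.
  rewrite ht -hkm.
  have -> : ((k.+1 + m).+1 = k + m + 2)%N by rewrite addSn addn2.
  by rewrite !exprD (_ : (4 : rat) ^+ 2 = 16) //; ring.
have [b' [hb' e]] := stepL hK hM he ht' hb.
exists b'; split => //.
by rewrite wS hw exprS e.
Qed.

Lemma baseL t r (e s : rat) : (e = 5 \/ e = 7) -> Z2 s ->
  t = 1 + 4 ^+ r.+3 * (e + 8 * s) ->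
  exists b2, good b2 /\ 2 * iter 2 (f t) 1 = -1 + 4 ^+ r.+2 * b2.
Proof.
move=> he hs ht.
have h1 : 2 * iter 1 (f t) 1 = 2 - 3 * t.
  rewrite wS /= mulr1 /G; by field.
have hR : Z2 (4 ^+ r) by z2.
set R := 4 ^+ r in hR.
have e3 : (4 : rat) ^+ r.+3 = 64 * R by rewrite !exprS /R; ring.
have e2 : (4 : rat) ^+ r.+2 = 16 * R by rewrite !exprS /R; ring.
rewrite e3 in ht; rewrite e2.
pose eta := e + 8 * s.
pose tau := 8 * R * eta.
pose d := - (24 * R * eta).
case: he => ee.
- pose Y := - 59 - 93 * s - 81 * tau * eta + 54 * t * eta * d - 72 * t * eta * d ^+ 2.
  exists (7 + 8 * Y); split.
    exists Y; split; last by right.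
    rewrite /Y /tau /d /eta ht ee; z2.
  rewrite wS h1. apply: G_eq. rewrite /Y /tau /d /eta ht ee. ring.
- pose Y := - 82 - 93 * s - 81 * tau * eta + 54 * t * eta * d - 72 * t * eta * d ^+ 2.
  exists (5 + 8 * Y); split.
    exists Y; split; last by left.
    rewrite /Y /tau /d /eta ht ee; z2.
  rewrite wS h1. apply: G_eq. rewrite /Y /tau /d /eta ht ee. ring.
Qed.

Definition S (w : rat) := (exists y, Z2 y /\ w = 19 + 32 * y) \/ (exists y, Z2 y /\ w = 6 + 8 * y).

Lemma S_Z2 w : S w -> Z2 w.
Proof. by case=> [[y [hy ->]]|[y [hy ->]]]; z2. Qed.

Lemma S_step t tau w : Z2 tau -> t = 1 + 32 * tau -> S w -> S (G t w).
Proof.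
move=> htau ht [[y [hy ew]]|[y [hy ew]]].
- right.
  pose W := 45 + 152 * y + 128 * y ^+ 2.
  pose V := 4 * tau + W + 32 * tau * W.
  pose Z := y + 4 * V * (1 + 2 * y).
  exists (1 + 3 * Z); split.
    rewrite /Z /V /W; z2.
  apply: G_eq. rewrite /Z /V /W ew ht. ring.
- left.
  have [y1 [hy1 [ey|ey]]] := Z2_parity hy.
  + pose P := 81 + 432 * y + 720 * y ^+ 2 + 384 * y ^+ 3.
    pose Y := 2 + (27 * y1 + 90 * y1 ^+ 2) + 12 * y ^+ 3 + tau * P.
    exists Y; split.
      rewrite /Y /P; z2.
    apply: G_eq. rewrite /Y /P ew ey ht. ring.
  + pose P := 81 + 432 * y + 720 * y ^+ 2 + 384 * y ^+ 3.
    pose Y := 2 + (36 + 117 * y1 + 90 * y1 ^+ 2) + 12 * y ^+ 3 + tau * P.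
    exists Y; split.
      rewrite /Y /P; z2.
    apply: G_eq. rewrite /Y /P ew ey ht. ring.
Qed.

Lemma endL t tau b : Z2 tau -> t = 1 + 32 * tau -> good b -> S (G t (-1 + b)).
Proof.
move=> htau ht [y [hy [eb|eb]]].
- right.
  pose q := y + y ^+ 2.
  pose tau' := 4 * tau.
  pose Z := 2 * tau' + q + 2 * y + 8 * tau' * q + 16 * tau' * y + 8 * q * y + 64 * tau' * q * y.
  exists (1 + 6 * Z); split.
    rewrite /Z /q /tau'; z2.
  apply: G_eq. rewrite /Z /q /tau' eb ht. ring.
- apply: (S_step htau ht). right. exists y; split => //. rewrite eb; ring.
Qed.



Lemma core t n (e s : rat) : (3 <= n)%N -> (e = 5 \/ e = 7) -> Z2 s ->
  t = 1 + 4 ^+ n * (e + 8 * s) -> forall m, Z2 (2 * iter m (f t) 1).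
Proof.
move=> hn he hs.
have er : n = (n - 3).+3 by rewrite -addn3 subnK.
rewrite er; set r := (n - 3)%N => ht.
have hez : Z2 e by case: he => ->; z2.
have heta : Z2 (e + 8 * s) by z2.
have [b2 [hb2 hw2]] := baseL he hs ht.
have htr := transL heta ht hb2 hw2.
have htau : t = 1 + 32 * (2 * 4 ^+ r * (e + 8 * s)) by rewrite ht !exprS; ring.
have htauZ : Z2 (2 * 4 ^+ r * (e + 8 * s)) by z2.
have h1 : 2 * iter 1 (f t) 1 = 2 - 3 * t.
  rewrite wS /= mulr1 /G; by field.
have hS : forall j, S (2 * iter (r + 5 + j) (f t) 1).
  elim=> [|j IH].
  - have [b [hb hw]] := htr r.+2 0%N (addn0 _).
    rewrite addn0 (_ : (r + 5 = (r.+2).+2.+1)%N); last by rewrite addnC.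
    rewrite wS hw expr0 mul1r. exact: endL htauZ htau hb.
  - rewrite addnS wS. exact: S_step htauZ htau IH.
move=> m. case: (leqP m (r + 4)) => hm.
- case: m hm => [|[|k]] hm.
  + rewrite /= mulr1; z2.
  + rewrite h1 ht; z2.
  + have hk : (k <= r.+2)%N by rewrite -ltnS -ltnS -[(r.+2).+2]addn4.
    have [b [hb hw]] := htr k (r.+2 - k)%N (subnKC hk).
    rewrite hw. have := good_Z2 hb => hbz. z2.
- have e5 : (r + 5 + (m - (r + 5)) = m)%N by rewrite subnKC //; lia.
  rewrite -e5. apply: S_Z2. exact: hS.
Qed.

Lemma bound_from (t : nat -> rat) n (e : rat) : (3 <= n)%N -> (e = 5 \/ e = 7) ->
  in_cdisk t (1 + e * 2%:Q ^+ (2 * n)) (radius n) -> pcb t.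
Proof.
move=> hn he [N hN].
have hk : forall k, (N <= k)%N -> forall m, Z2 (2 * iter m (f (t k)) 1).
  move=> k hk. have := hN k hk. rewrite /radius => h.
  have hz := abs2_Z2 h.
  apply: (core hn he hz).
  have h4 : (4 : rat) ^+ n != 0 by rewrite expf_neq0.
  have e4 : (2%:Q ^+ 2 : rat) = 4 by rewrite expr2; ring.
  rewrite exprD exprM e4.
  field. by rewrite h4.
have hb1 : forall k, (N <= k)%N -> forall m, abs2 (iter m (f (t k)) 1) <= 2.
  move=> k hk' m. have := Z2_abs2 (hk k hk' m).
  by rewrite (_ : 2 * iter m (f (t k)) 1 / 2 = iter m (f (t k)) 1) //; field.
split; exists 2 => m; exists N => k hk'; rewrite /orbit.
- case: m => [|m]; first by rewrite /= /abs2 eqxx.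
  change (abs2 (iter m.+1 (f (t k)) 0) <= 2).
  rewrite iterSr (_ : f (t k) 0 = 1); first exact: hb1.
  rewrite /f; ring.
- exact: hb1.
Qed.

Theorem mainTheorem5 (t : nat -> rat) :
  cauchy2 t ->
  (exists n : nat, (3 <= n)%N /\
     (in_cdisk t (center_a n) (radius n) \/ in_cdisk t (center_b n) (radius n))) ->
  pcb t.
Proof.
move=> _ [n [hn [h|h]]].
- by apply: (bound_from (e := 5) hn); [left|].
- by apply: (bound_from (e := 7) hn); [right|].
Qed.
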